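(* Suppose $k_i^{(m)},h_i^{(m)}\in\mathbb{C}$ ($m,i\in\mathbb{Z}$) satisfy $$(i-n)k_i^{(m)}=(2m-n-i)h_{n-m+i}^{(n)}\quad\text{for all }m,n,i\in\mathbb{Z}.$$ Then there is $\lambda\in\mathbb{C}$ such that $k_i^{(m)}=h_i^{(m)}=\delta_{m,i}\lambda$ for all $m,i\in\mathbb{Z}$.
   Context: $\delta_{m,i}$ denotes the Kronecker delta. *)

(* Defs.v *)
From HB Require Import structures.
From mathcomp Require Import all_boot all_order all_algebra.
From mathcomp Require Import complex.
From mathcomp Require Import reals.

(* Main.v *)
Require Import Defs.
From HB Require Import structures.
From mathcomp Require Import all_boot all_order all_algebra.
From mathcomp Require Import complex.
From mathcomp Require Import reals.
From mathcomp Require Import zify.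
Import GRing.Theory Num.Theory.
Local Open Scope ring_scope.
Local Open Scope complex_scope.

Theorem proposition2p1 (R : realType) (k h : int -> int -> R[i])
  (H : forall m n i : int,
      (i - n)%:~R * k m i = (2 * m - n - i)%:~R * h n (n - m + i)) :
  exists lambda : R[i], forall m i : int,
    k m i = (if m == i then lambda else 0) /\
    h m i = (if m == i then lambda else 0).
Proof.
have hoff : forall n j : int, j != n -> h n j = 0.
  move=> n j Hjn.
  have := H (2 * n - j) n n.
  rewrite subrr mul0r.
  have -> : n - (2 * n - j) + n = j by lia.
  move/esym/eqP; rewrite mulf_eq0 intr_eq0; case/orP=> /eqP E //.
  by exfalso; move: Hjn; lia.
have hdiag : forall n m : int, n != m -> k m m = h n n.
  move=> n m Hnm.
  have := H m n m.
  have -> : 2 * m - n - m = m - n by lia.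
  have -> : n - m + m = n by lia.
  move/eqP; rewrite -subr_eq0 -mulrBr mulf_eq0 intr_eq0 subr_eq0.
  case/orP=> /eqP E; first by exfalso; move: Hnm; lia.
  by apply/eqP; rewrite -subr_eq0 E.
have koff : forall m i : int, m != i -> k m i = 0.
  move=> m i Hmi.
  have := H m (i + 1) i.
  have -> : i - (i + 1) = -1 by lia.
  rewrite (hoff (i + 1)); last by apply/negP => /eqP E; move: Hmi; lia.
  by rewrite mulr0 mulN1r => /eqP; rewrite oppr_eq0 => /eqP.
have hd : forall n, h n n = k 0 0.
  move=> n; case: (eqVneq n 0) => [->|nz]; last by rewrite (hdiag n 0).
  have e1 : k 1 1 = h 0 0 by apply: hdiag.
  have e2 : k 1 1 = h 2 2 by apply: hdiag.
  have e3 : k 0 0 = h 2 2 by apply: hdiag.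
  by rewrite -e1 e2 e3.
exists (k 0 0) => m i.
case: (eqVneq m i) => [<-|Hmi]; last by rewrite koff // hoff // eq_sym.
have -> : k m m = k 0 0 by rewrite -(hd (m + 1)); apply: hdiag; apply/negP => /eqP; lia.
by rewrite hd.
Qed.
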